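(* If a depth-proper mttr $M$ is finite-ML-nesting, then $M$ is LHI, i.e., there is $b\in\mathbb N$ with $H(M(t))\le b\cdot H(t)$ for all input trees $t$.
   Context: Trees: for a ranked alphabet $\Sigma$, $T_\Sigma$ is the set of finite ranked ordered trees over $\Sigma$, and $T_\Sigma(A)$ the trees over $\Sigma$ with additional rank-0 symbols from $A$. $X_k=\{x_1,\dots,x_k\}$ are input variables and $Y=\{y_1,y_2,\dots\}$, $Y_m=\{y_1,\dots,y_m\}$ are parameters. A (deterministic bottom-up) tree automaton $(P,\Sigma,h)$ has a finite state set $P$ and maps $h_\sigma:P^k\to P$ for $\sigma\in\Sigma^{(k)}$; $\hat h:T_\Sigma\to P$ is its run and $L_p=\{s\in T_\Sigma\mid \hat h(s)=p\}$. A (total, deterministic) macro tree transducer with look-ahead (mttr) is $M=(Q,P,\Sigma,\Delta,q_0,R,h)$ where $Q$ is a ranked alphabet of states, $\Sigma,\Delta$ are ranked input/output alphabets, $(P,\Sigma,h)$ is a tree automaton (the look-ahead), $q_0\in Q^{(0)}$, and for each $q\in Q^{(m)}$, $\sigma\in\Sigma^{(k)}$, $p_1,\dots,p_k\in P$ there is exactly one rule $\langle q,\sigma(x_1:p_1,\dots,x_k:p_k)\rangle(y_1,\dots,y_m)\to t$ with $t\in T_{\Delta\cup\langle Q,X_k\rangle}(Y_m)$, where $\langle q',x_i\rangle$ has the rank of $q'$. For $q\in Q^{(m)}$ and $s=\sigma(s_1,\dots,s_k)$, $M_q(s)\in T_\Delta(Y_m)$ is obtained from the right-hand side of the rule for $(q,\sigma,\hat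 h(s_1),\dots,\hat h(s_k))$ by replacing (recursively, innermost first) each subtree $\langle q',x_i\rangle(\xi_1,\dots,\xi_n)$ by $M_{q'}(s_i)$ with each $y_j$ replaced by (the result for) $\xi_j$; $M(s)=M_{q_0}(s)$. Extension and reachability: $\hat M$ is the mttr with input alphabet $\Sigma\cup P$ (each $p\in P$ a rank-0 input symbol with $\hat h_p()=p$), output alphabet $\Delta\cup\langle Q,P\rangle$ (where $\langle q,p\rangle$ has the rank of $q$), the rules of $M$ plus the rules $\langle q,p\rangle(y_1,\dots,y_m)\to\langle q,p\rangle(y_1,\dots,y_m)$ for $q\in Q^{(m)}$, $p\in P$. A pair $\langle q,p\rangle$ is reachable if it occurs in $\hat M(s)$ for some $s\in T_\Sigma(P)$. Depth-proper: for $y\in Y$ and $s\in T_\Delta(Y)$, $\lfloor s\rfloor_y$ is obtained from $s$ by replacing every maximal subtree not containing $y$ by a new rank-0 symbol $\$$. $M$ is depth-proper if for every reachable $\langle q,p\rangle$ with $q\in Q^{(m)}$ and every $y\in Y_m$, the set $\{\lfloor M_q(s)\rfloor_y\mid s\in L_p\}$ is infinite. Height: $H(t)$ is the number of nodes on a longest root-to-leaf path of $t$. ML-nesting: for $t\in T_\Sigma(P)$, the nesting of a root-to-leaf path of $\hat M(t)$ is the number of its nodes labeled by symbols of $\langle Q,P\rangle$. $M$ is finite-ML-nesting if there is $b\in\mathbb N$ such that for every $t\in T_\Sigma(P)$ (with any number of leaves labeled by symbols of $P$), every root-to-leaf path of $\hat M(t)$ has nesting at most $b$. *)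

(* Defs.v *)
From mathcomp Require Import all_boot.
From Stdlib Require List.
Set Implicit Arguments. Unset Strict Implicit. Unset Printing Implicit Defensive.

(* Finite ordered labelled trees (ranks checked by separate predicates). *)
Inductive tree (A : Type) : Type := Node : A -> seq (tree A) -> tree A.
Arguments Node {A}.

Fixpoint height A (t : tree A) : nat :=
  match t with Node _ ch => (foldr maxn 0 (map (@height A) ch)).+1 end.

Fixpoint paths A (t : tree A) : seq (seq A) :=
  match t with
  | Node a ch => if ch is [::] then [:: [:: a]]
                 else map (cons a) (flatten (map (@paths A) ch))
  end.

(* Right-hand sides: trees over Delta u <Q,X_k> u Y_m.
   RCall q i args = <q, x_(i+1)>(args);  RPar j = y_(j+1)  (0-based indices). *)
Inductive rhs (D Q : Type) : Type :=
  | RD : D -> seq (rhs D Q) -> rhs D Q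
  | RCall : Q -> nat -> seq (rhs D Q) -> rhs D Q
  | RPar : nat -> rhs D Q.
Arguments RPar {D Q}.

(* Output labels of the extension \hat M : Delta u <Q,P> u Y  (OY j = y_(j+1)). *)
Inductive olab (D Q P : Type) : Type :=
  | OD : D -> olab D Q P
  | OQP : Q -> P -> olab D Q P
  | OY : nat -> olab D Q P.
Arguments OY {D Q P}.

(* Totality/determinism: rules is a function (q, sigma, p_1..p_k) |-> rhs. *)
Unset Implicit Arguments.
Record mttr (S D : finType) := MTTR {
  st : finType;
  rkQ : st -> nat;
  la : finType;
  lah : S -> seq la -> la;
  q0 : st;
  rules : st -> S -> seq la -> rhs D st
}.


Set Implicit Arguments.
Arguments MTTR {S D}.
Arguments st {S D}.
Arguments rkQ {S D}.
Arguments la {S D}.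
Arguments lah {S D}.
Arguments q0 {S D}.
Arguments rules {S D}.

Section MTTR.
Variables (S D : finType) (rkS : S -> nat) (rkD : D -> nat).

Variable M : mttr S D.
Notation Q := (st M). Notation P := (la M).
Notation otree := (tree (olab D Q P)).

Fixpoint wf_rhs (k m : nat) (r : rhs D Q) : bool :=
  match r with
  | RD d args => (size args == rkD d) && all (wf_rhs k m) args
  | RCall q i args => (i < k) && (size args == rkQ M q) && all (wf_rhs k m) args
  | RPar j => j < m
  end.

Definition wf_mttr : Prop :=
  rkQ M (q0 M) = 0 /\
  forall q s ps, size ps = rkS s -> wf_rhs (rkS s) (rkQ M q) (rules M q s ps).

(* Input trees in T_Sigma(P): labels inl sigma (rank rkS sigma) or inr p (rank 0). *)
Fixpoint in_TSP (t : tree (S + P)) : bool :=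
  match t with
  | Node (inl s) ch => (size ch == rkS s) && all in_TSP ch
  | Node (inr _) ch => nilp ch
  end.

Fixpoint in_TS (t : tree (S + P)) : bool :=
  match t with
  | Node (inl s) ch => (size ch == rkS s) && all in_TS ch
  | Node (inr _) _ => false
  end.

Fixpoint hrun (t : tree (S + P)) : P :=
  match t with
  | Node (inl s) ch => lah M s (map hrun ch)
  | Node (inr p) _ => p
  end.

Definition Lp (p : P) (t : tree (S + P)) : Prop := in_TS t /\ hrun t = p.

Fixpoint subst (t : otree) (args : seq otree) : otree :=
  match t with
  | Node (OY j) ch => nth (Node (OY j) ch) args j
  | Node l ch => Node l (map (fun c => subst c args) ch)
  end.

Definition dummy : otree := Node (OY 0) [::].

(* evaluation of a rhs, given the translations M_q'(s_i) of the subtrees *)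
Fixpoint interp (evs : seq (Q -> otree)) (r : rhs D Q) : otree :=
  match r with
  | RD d args => Node (OD _ _ d) (map (interp evs) args)
  | RCall q i args => subst (nth (fun _ => dummy) evs i q) (map (interp evs) args)
  | RPar j => Node (OY j) [::]
  end.

(* \hat M_q(s) for s in T_Sigma(P); on T_Sigma it coincides with M_q(s).
   A p-leaf is translated by the extra rule <q,p>(y_1..y_m) -> <q,p>(y_1..y_m). *)
Fixpoint evalq (t : tree (S + P)) : Q -> otree :=
  match t with
  | Node (inl s) ch =>
      let evs := map evalq ch in
      fun q => interp evs (rules M q s (map hrun ch))
  | Node (inr p) _ =>
      fun q => Node (OQP _ q p) (mkseq (fun j => Node (OY j) [::]) (rkQ M q))
  end.

Definition Mq (q : Q) (t : tree (S + P)) : otree := evalq t q.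
Definition Mhat (t : tree (S + P)) : otree := evalq t (q0 M).

Definition is_QP (q : Q) (p : P) (l : olab D Q P) : bool :=
  if l is OQP q' p' then (q' == q) && (p' == p) else false.

Fixpoint occurs (f : olab D Q P -> bool) (t : otree) : bool :=
  match t with Node l ch => f l || has (occurs f) ch end.

Definition reachable (q : Q) (p : P) : Prop :=
  exists t, in_TSP t /\ occurs (is_QP q p) (Mhat t).

Definition is_Y (j : nat) (l : olab D Q P) : bool :=
  if l is OY j' then j' == j else false.

(* |_ s _|_y : maximal subtrees not containing y replaced by $ (= None). *)
Fixpoint cut (j : nat) (t : otree) : tree (option (olab D Q P)) :=
  match t with
  | Node l ch => if occurs (is_Y j) t then Node (Some l) (map (cut j) ch)
                 else Node None [::]
  end.

Definition depth_proper : Prop :=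
  forall q p, reachable q p ->
  forall j, j < rkQ M q ->
  ~ (exists l : list (tree (option (olab D Q P))),
       forall t, Lp p t -> List.In (cut j (Mq q t)) l).

Definition is_QPlab (l : olab D Q P) : bool := if l is OQP _ _ then true else false.

Definition nesting (pi : seq (olab D Q P)) : nat := count is_QPlab pi.

Definition finite_ML_nesting : Prop :=
  exists b : nat, forall t, in_TSP t ->
    forall pi, List.In pi (paths (Mhat t)) -> nesting pi <= b.

Definition LHI : Prop :=
  exists b : nat, forall t, in_TS t -> height (Mhat t) <= b * height t.

End MTTR.

(* Main.v *)
Require Import Defs.
From mathcomp Require Import all_boot zify.
From Stdlib Require List.
Set Implicit Arguments. Unset Strict Implicit. Unset Printing Implicit Defensive.

Definition maxs (s : seq nat) := foldr maxn 0 s.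

Lemma maxs_le s K : (forall x, List.In x s -> x <= K) -> maxs s <= K.
Proof.
elim: s => [|a s IH] H //=.
rewrite geq_max; apply/andP; split; [apply: H; left | apply: IH => x Hx; apply: H; right]; done.
Qed.

Lemma le_maxs s x : List.In x s -> x <= maxs s.
Proof.
elim: s => [|a s IH] //= [<-|Hx]; first exact: leq_maxl.
exact: leq_trans (IH Hx) (leq_maxr _ _).
Qed.

Lemma In_map' T U (f : T -> U) s y : List.In y (map f s) -> exists x, List.In x s /\ y = f x.
Proof. move/List.in_map_iff => [x [<- Hx]]; by exists x. Qed.

Lemma maxs_map_le T (f g : T -> nat) s : (forall x, List.In x s -> f x <= g x) ->
  maxs (map f s) <= maxs (map g s).
Proof.
move=> H; apply: maxs_le => y Hy; have [x [Hx ->]] := In_map' Hy.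
apply: leq_trans (H x Hx) _; apply: le_maxs; exact: List.in_map.
Qed.

Lemma nth_In T (x0 : T) s i : i < size s -> List.In (nth x0 s i) s.
Proof. elim: s i => [|a s IH] [|i] //= Hi; [left | right; exact: IH]; done. Qed.

Lemma In_nth T (x0 : T) s x : List.In x s -> exists i, i < size s /\ x = nth x0 s i.
Proof.
elim: s => [|a s IH] //= [<-|Hx]; first by exists 0.
have [i [Hi ->]] := IH Hx; by exists i.+1.
Qed.

Lemma maxs_nth_le T U (x0 : T) (y0 : U) (f : T -> nat) (g : U -> nat) A B :
  size A = size B -> (forall j, j < size A -> f (nth x0 A j) <= g (nth y0 B j)) ->
  maxs (map f A) <= maxs (map g B).
Proof.
elim: A B => [|a A IH] [|b B] //= [Hs] H.
rewrite geq_max; apply/andP; split.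
  apply: leq_trans (H 0 isT) (leq_maxl _ _).
apply: leq_trans (IH B Hs (fun j hj => H j.+1 hj)) (leq_maxr _ _).
Qed.

Lemma maxs_attained T (f : T -> nat) s : s <> [::] -> exists x, List.In x s /\ maxs (map f s) = f x.
Proof.
elim: s => [|a s IH] // _.
case: s IH => [|b s] IH.
  exists a; split; [left|] => //=; by rewrite maxn0.
have [x [Hx Ex]] := IH ltac:(done).
rewrite /= in Ex *.
case: (leqP (f a) (maxn (f b) (foldr maxn 0 [seq f i | i <- s]))) => Hle.
  exists x; split; [right|]; first done. by rewrite -Ex /maxs /=.
exists a; split; [left|] => //; by rewrite (maxn_idPl (ltnW Hle)).
Qed.

Lemma In_flatten T (L : seq (seq T)) x : List.In x (flatten L) -> exists l, List.In l L /\ List.In x l.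
Proof.
elim: L => [|l L IH] //= Hx0; case: (List.in_app_or _ _ _ Hx0) => Hx; first by exists l; split; [left|].
have [l' [H1 H2]] := IH Hx; exists l'; split; [right|]; done.
Qed.

Lemma flatten_In T (L : seq (seq T)) l x : List.In l L -> List.In x l -> List.In x (flatten L).
Proof.
elim: L => [|l0 L IH] //= [<-|Hl] Hx; apply: List.in_or_app; [left|right]; auto.
Qed.

Lemma map_ext_In T U (f g : T -> U) s : (forall x, List.In x s -> f x = g x) -> map f s = map g s.
Proof. elim: s => [|a s IH] //= H; rewrite H; [congr cons; apply: IH => x Hx; apply: H; right|left]; done. Qed.

Lemma all_In T (a : pred T) s : (forall x, List.In x s -> a x) -> all a s.
Proof. elim: s => [|b s IH] //= H; rewrite H; [apply: IH => x Hx; apply: H; right|left]; done. Qed.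

Lemma In_all T (a : pred T) s x : all a s -> List.In x s -> a x.
Proof. elim: s => [|b s IH] //= /andP [Hb Hs] [<-|Hx]; [done| exact: IH]. Qed.

Definition tree_ind' (A : Type) (P : tree A -> Prop)
  (H : forall a ch, (forall c, List.In c ch -> P c) -> P (Node a ch)) : forall t, P t :=
  fix F t := match t with
    Node a ch => H a ch ((fix G l := match l return forall c, List.In c l -> P c with
       | [::] => fun c (hc : List.In c [::]) => False_ind _ hc
       | c0 :: l' => fun c hc => match hc with
           | or_introl e => eq_ind c0 P (F c0) c e
           | or_intror h => G l' c h end end) ch) end.

Definition rhs_ind' (D Q : Type) (P : rhs D Q -> Prop)
  (H1 : forall d args, (forall c, List.In c args -> P c) -> P (RD d args))
  (H2 : forall q i args, (forall c, List.In c args -> P c) -> P (RCall q i args))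
  (H3 : forall j, P (RPar j)) : forall r, P r :=
  fix F r := let G := (fix G l := match l return forall c, List.In c l -> P c with
       | [::] => fun c (hc : List.In c [::]) => False_ind _ hc
       | c0 :: l' => fun c hc => match hc with
           | or_introl e => eq_ind c0 P (F c0) c e
           | or_intror h => G l' c h end end) in
   match r with
   | RD d args => H1 d args (G args)
   | RCall q i args => H2 q i args (G args)
   | RPar j => H3 j end.

Lemma paths_size A (t : tree A) pi : List.In pi (paths t) -> size pi <= height t.
Proof.
elim/tree_ind': t pi => a ch IH pi /=.
case: ch IH => [|c0 ch] IH; first by case=> // <-.
move=> H0; have [pi' [H1 ->]] := In_map' H0.
have [l [H2 Hp]] := In_flatten H1. have [c [Hc El]] := In_map' H2. subst l => /=.
rewrite ltnS; apply: leq_trans (IH c Hc pi' Hp) _.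
apply: (@le_maxs (map (@height A) (c0 :: ch))); exact: (List.in_map (@height A) _ _ Hc).
Qed.

Lemma heightE A (a : A) ch : height (Node a ch) = (maxs (map (@height A) ch)).+1.
Proof. by []. Qed.

Section Main.
Variables (S D : finType) (rkS : S -> nat) (rkD : D -> nat) (M : mttr S D).
Local Notation Q := (st M).
Local Notation P := (la M).
Local Notation otree := (tree (olab D Q P)).
Local Notation itree := (tree (S + P)).
Local Notation dmy := (dummy M).

Definition w c (l : olab D Q P) := if is_QPlab l then c else 1.
Fixpoint hw c (u : otree) : nat :=
  match u with Node l ch => w c l + maxs (map (hw c) ch) end.

Fixpoint pr m (u : otree) : bool :=
  match u with Node l ch => (if l is OY j then j < m else true) && all (pr m) ch end.

Lemma height_subst_node (l : olab D Q P) ch A :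
  (forall c, List.In c ch -> height (subst c A) <= height c + maxs (map (@height _) A)) ->
  height (Node l (map (fun c => subst c A) ch)) <= height (Node l ch) + maxs (map (@height _) A).
Proof.
move=> IH; rewrite !heightE addSn ltnS; apply: maxs_le => y Hy.
have [z [Hz ->]] := In_map' Hy; have [c [Hc ->]] := In_map' Hz.
apply: leq_trans (IH c Hc) _; rewrite leq_add2r; apply: le_maxs; exact: List.in_map.
Qed.

Lemma height_subst (u : otree) A : height (subst u A) <= height u + maxs (map (@height _) A).
Proof.
elim/tree_ind': u => l ch IH.
case: l IH => [d|q p|j] IH; try exact: height_subst_node.
rewrite /=; case: (ltnP j (size A)) => Hj.
  apply: leq_trans (leq_addl _ _); apply: le_maxs; apply: List.in_map; exact: nth_In.
by rewrite nth_default // leq_addr.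
Qed.

Lemma height_le_hw c (u : otree) : 0 < c -> height u <= hw c u.
Proof.
move=> Hc; elim/tree_ind': u => l ch IH.
rewrite heightE /= -add1n; apply: leq_add; first by rewrite /w; case: is_QPlab.
exact: maxs_map_le.
Qed.

Lemma mono_subst c (u : otree) A B : 0 < c -> size A = size B ->
  (forall j, j < size A -> height (nth dmy A j) <= hw c (nth dmy B j)) ->
  height (subst u A) <= hw c (subst u B).
Proof.
move=> Hc Hs H; elim/tree_ind': u => l ch IH.
have Hnode : height (Node l (map (fun x => subst x A) ch)) <= hw c (Node l (map (fun x => subst x B) ch)).
  rewrite heightE /= -add1n; apply: leq_add; first by rewrite /w; case: is_QPlab.
  apply: (@maxs_nth_le _ _ dmy dmy); first by rewrite !size_map.
  move=> j; rewrite size_map => Hj; rewrite !(nth_map dmy) //; exact: IH (@nth_In _ dmy _ _ Hj).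
case: l IH Hnode => [d|q p|j] IH Hnode //=.
case: (ltnP j (size A)) => Hj.
  rewrite (set_nth_default dmy) // (set_nth_default dmy) -?Hs //; exact: H.
rewrite !nth_default -?Hs //; exact: height_le_hw.
Qed.

Lemma subst_comp (u : otree) X A : pr (size X) u ->
  subst (subst u X) A = subst u (map (fun x => subst x A) X).
Proof.
elim/tree_ind': u => l ch IH.
case: l IH => [d|q p|j] IH /=; [move=> Hall ..|move=> /andP [Hj Hall]];
  try (congr Node; rewrite -map_comp; apply: map_ext_In => x Hx; exact: IH x Hx (In_all Hall Hx)).
rewrite (nth_map dmy) // (set_nth_default dmy) //.
Qed.

Lemma pr_subst m (u : otree) X : pr (size X) u -> (forall x, List.In x X -> pr m x) ->
  pr m (subst u X).
Proof.
move=> Hu HX; elim/tree_ind': u Hu => l ch IH.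
case: l IH => [d|q p|j] IH /=; [move=> Hall ..|move=> /andP [Hj Hall]];
  try (rewrite all_map; apply: all_In => x Hx; exact: IH x Hx (In_all Hall Hx)).
apply: HX; rewrite (set_nth_default dmy) //; exact: nth_In.
Qed.

Lemma pr_subst0 (u : otree) : pr 0 u -> subst u [::] = u.
Proof.
elim/tree_ind': u => l ch IH.
case: l IH => [d|q p|j] IH //= Hall;
  congr Node; rewrite -[RHS]map_id; apply: map_ext_In => x Hx; exact: IH x Hx (In_all Hall Hx).
Qed.

Fixpoint rh (r : rhs D Q) : nat :=
  match r with
  | RD _ args => (maxs (map rh args)).+1
  | RCall _ _ args => (maxs (map rh args)).+1
  | RPar _ => 1 end.

Lemma interp_height evs r E : (forall i q, height (nth (fun _ => dmy) evs i q) <= E) ->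
  height (interp evs r) <= rh r * E.+1.
Proof.
move=> HE; elim/rhs_ind': r => [d args IH|q i args IH|j] //=.
- rewrite mulSn -add1n; apply: leq_add => //; apply: maxs_le => y Hy.
  have [z [Hz ->]] := In_map' Hy; have [a [Ha ->]] := In_map' Hz.
  apply: leq_trans (IH a Ha) _; rewrite leq_mul2r; apply/orP; right.
  apply: le_maxs; exact: List.in_map.
- apply: leq_trans (height_subst _ _) _.
  rewrite mulSn; apply: leq_add; first exact: leqW.
  apply: maxs_le => y Hy.
  have [z [Hz ->]] := In_map' Hy; have [a [Ha ->]] := In_map' Hz.
  apply: leq_trans (IH a Ha) _; rewrite leq_mul2r; apply/orP; right.
  apply: le_maxs; exact: List.in_map.
Qed.

Definition R := \max_(q : Q) \max_(s : S) \max_(ps : (rkS s).-tuple P) rh (rules M q s ps).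

Lemma rules_le q s ps : size ps = rkS s -> rh (rules M q s ps) <= R.
Proof.
move=> Hs.
pose tp : (rkS s).-tuple P := Tuple (introT eqP Hs).
have -> : ps = tval tp by [].
apply: leq_trans _ (leq_bigmax q).
apply: leq_trans _ (leq_bigmax (F := fun s => \max_(ps : (rkS s).-tuple P) rh (rules M q s ps)) s).
exact: (leq_bigmax (F := fun ps : (rkS s).-tuple P => rh (rules M q s ps)) tp).
Qed.

Fixpoint g n := match n with 0 => 2 | n'.+1 => R * (g n').+1 + 2 end.

Lemma g_ge2 n : 2 <= g n.
Proof. by case: n => [|n] //=; rewrite leq_addl. Qed.

Lemma evalq_height n : forall t : itree, in_TSP rkS t -> height t <= n -> forall q, height (evalq t q) <= g n.
Proof.
elim: n => [|n IH] [[s|p] ch] //=.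
- move=> /andP [/eqP Hsz Hall] Hh q.
  have HE : forall i q', height (nth (fun _ => dmy) (map (@evalq _ _ M) ch) i q') <= g n.
    move=> i q'; case: (ltnP i (size ch)) => Hi.
      rewrite (nth_map (Node (inr (lah M s [::])) [::])) //.
      apply: IH; first exact: (all_nthP _ Hall).
      rewrite -ltnS; apply: leq_trans _ Hh; rewrite ltnS; apply: le_maxs; apply: List.in_map; exact: nth_In.
    rewrite nth_default ?size_map //; exact: leq_trans _ (g_ge2 n).
  apply: leq_trans (interp_height (rules M q s (map (@hrun _ _ M) ch)) HE) _.
  apply: leq_trans (leq_addr 2 _); rewrite leq_mul2r; apply/orP; right.
  by apply: rules_le; rewrite size_map.
- move=> _ _ q; apply: leq_trans _ (leq_addl _ 2); rewrite ltnS; apply: maxs_le => y Hy.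
  have [z [Hz ->]] := In_map' Hy; have [k [_ ->]] := In_map' Hz; done.
Qed.

Lemma interp_pr evs k m r : wf_rhs rkD k m r -> size evs = k ->
  (forall i q, i < k -> pr (rkQ M q) (nth (fun _ => dmy) evs i q)) -> pr m (interp evs r).
Proof.
move=> Hwf Hs H; elim/rhs_ind': r Hwf => [d args IH|q i args IH|j] /=.
- move=> /andP [_ Hall]; rewrite all_map; apply: all_In => a Ha; exact: IH a Ha (In_all Hall Ha).
- move=> /andP [/andP [Hi /eqP Hsz] Hall]; apply: pr_subst.
    by rewrite size_map Hsz; apply: H.
  move=> x Hx; have [a [Ha ->]] := In_map' Hx; exact: IH a Ha (In_all Hall Ha).
- by move=> ->.
Qed.

Lemma pr_leaf m q p : pr m (Node (OQP D q p) (mkseq (fun j => Node (OY j) [::]) m)).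
Proof.
rewrite /= /mkseq all_map; apply/allP => j; rewrite mem_iota add0n /= => Hj; by rewrite Hj.
Qed.

Lemma evalq_pr (Hwf : wf_mttr rkS rkD M) t : in_TSP rkS t -> forall q, pr (rkQ M q) (evalq t q).
Proof.
elim/tree_ind': t => [[s|p] ch IH] /=; last by move=> _ q; exact: pr_leaf.
move=> /andP [/eqP Hsz Hall] q.
apply: (interp_pr (k := rkS s)); first by apply: Hwf.2; rewrite size_map.
  by rewrite size_map.
move=> i q' Hi; rewrite -Hsz in Hi.
rewrite (nth_map (Node (inr (lah M s [::])) [::])) //.
have Hin := @nth_In _ (Node (inr (lah M s [::])) [::]) _ _ Hi.
exact: IH _ Hin (In_all Hall Hin) q'.
Qed.

Fixpoint trunc (d : nat) (t : itree) : itree :=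
  match d with
  | 0 => Node (inr (hrun t)) [::]
  | d'.+1 => match t with Node l ch => Node l (map (trunc d') ch) end
  end.

Lemma hrun_trunc d t : hrun (trunc d t) = hrun t.
Proof.
elim: d t => [|d IH] [[s|p] ch] //=.
by congr lah; rewrite -map_comp; apply: eq_map => x /=; exact: IH.
Qed.

Lemma in_TSP_trunc d t : in_TSP rkS t -> in_TSP rkS (trunc d t).
Proof.
elim: d t => [|d IH] [[s|p] ch] //=.
- move=> /andP [Hs Hall]; rewrite size_map Hs /= all_map.
  by apply: sub_all Hall => x /= /IH.
- by rewrite /nilp size_map.
Qed.

Lemma height_trunc d t : height (trunc d t) <= d.+1.
Proof.
elim: d t => [|d IH] [l ch] //=.
rewrite ltnS; apply: maxs_le => y Hy.
have [z [Hz ->]] := In_map' Hy; have [c [_ ->]] := In_map' Hz; exact: IH.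
Qed.

Definition rel c m (u v : otree) := pr m u /\ pr m v /\
  forall A B, size A = m -> size B = m ->
  (forall j, j < m -> height (nth dmy A j) <= hw c (nth dmy B j)) ->
  height (subst u A) <= hw c (subst v B).

Lemma interp_rel c evs evs' k m r : 0 < c -> wf_rhs rkD k m r -> size evs = k -> size evs' = k ->
  (forall i q, i < k -> rel c (rkQ M q) (nth (fun _ => dmy) evs i q) (nth (fun _ => dmy) evs' i q)) ->
  rel c m (interp evs r) (interp evs' r).
Proof.
move=> Hc Hwf Hs Hs' H.
split; first by apply: (interp_pr Hwf Hs) => i q Hi; case: (H i q Hi).
split; first by apply: (interp_pr Hwf Hs') => i q Hi; case: (H i q Hi) => _ [].
elim/rhs_ind': r Hwf => [d args IH|q i args IH|j] /=.
- move=> /andP [_ Hall] A B HA HB HAB.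
  rewrite -add1n; apply: leq_add => //; rewrite -/(maxs _).
  apply: (@maxs_nth_le _ _ dmy dmy); first by rewrite !size_map.
  move=> j; rewrite !size_map => Hj.
  rewrite !(nth_map dmy) ?size_map // !(nth_map (RPar 0)) //.
  have Hin := @nth_In _ (RPar 0) _ _ Hj.
  exact: IH _ Hin (In_all Hall Hin) A B HA HB HAB.
- move=> /andP [/andP [Hi /eqP Hsz] Hall] A B HA HB HAB.
  have [Hp1 [Hp2 H3]] := H i q Hi.
  rewrite !subst_comp ?size_map ?Hsz //.
  apply: H3; rewrite ?size_map ?Hsz //.
  move=> j Hj; rewrite -Hsz in Hj.
  rewrite -!map_comp !(nth_map (RPar 0)) //=.
  have Hin := @nth_In _ (RPar 0) _ _ Hj.
  exact: IH _ Hin (In_all Hall Hin) A B HA HB HAB.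
- move=> Hj A B HA HB HAB.
  rewrite (set_nth_default dmy) ?HA // (set_nth_default dmy) ?HB //; exact: HAB.
Qed.

Lemma map_subst_mkseq m (B : seq otree) : size B = m ->
  map (fun x : otree => subst x B) (mkseq (fun j => Node (OY j) [::]) m) = B.
Proof.
move=> Hs; apply: (@eq_from_nth _ dmy); first by rewrite size_map size_mkseq.
move=> i; rewrite size_map size_mkseq => Hi.
rewrite (nth_map dmy) ?size_mkseq // nth_mkseq //= (set_nth_default dmy) ?Hs //.
Qed.

Lemma rel_leaf c q p : 0 < c ->
  rel c (rkQ M q) (Node (OQP D q p) (mkseq (fun j => Node (OY j) [::]) (rkQ M q)))
                  (Node (OQP D q p) (mkseq (fun j => Node (OY j) [::]) (rkQ M q))).
Proof.
move=> Hc; split; first exact: pr_leaf. split; first exact: pr_leaf.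
move=> A B HA HB HAB; apply: mono_subst => //; first by rewrite HA HB.
by rewrite HA.
Qed.

Lemma trunc_rel (Hwf : wf_mttr rkS rkD M) c n : 0 < c ->
  (forall (s : itree) (q : Q), in_TSP rkS s -> height s <= n -> height (evalq s q) <= c) ->
  forall d t, in_TSP rkS t -> height t <= d + n ->
  forall q, rel c (rkQ M q) (evalq t q) (evalq (trunc d t) q).
Proof.
move=> Hc Hn; elim=> [|d IH] t Ht Hh q.
- split; first exact: evalq_pr. split; first exact: pr_leaf.
  move=> A B HA HB HAB /=.
  rewrite map_subst_mkseq //=.
  apply: leq_trans (height_subst _ _) _; apply: leq_add; first exact: Hn.
  apply: (@maxs_nth_le _ _ dmy dmy); first by rewrite HA HB.
  by rewrite HA.
case: t Ht Hh => [[s|p] ch] /=; last by move=> _ _; exact: rel_leaf.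
move=> /andP [/eqP Hsz Hall] Hh.
have -> : map (@hrun _ _ M) (map (trunc d) ch) = map (@hrun _ _ M) ch.
  by rewrite -map_comp; apply: eq_map => x; exact: hrun_trunc.
apply: (interp_rel (k := rkS s)) => //; first by apply: Hwf.2; rewrite size_map.
- by rewrite size_map.
- by rewrite !size_map.
move=> i q' Hi; rewrite -Hsz in Hi.
set x0 : itree := Node (inr (lah M s [::])) [::].
rewrite (nth_map x0) // (nth_map x0) ?size_map // (nth_map x0) //.
have Hin := @nth_In _ x0 _ _ Hi.
apply: IH; first exact: In_all Hall Hin.
rewrite -ltnS -addSn; apply: leq_trans _ Hh; rewrite ltnS.
apply: (@le_maxs (map (@height _) ch)); exact: List.in_map.
Qed.

Definition sumw c (pi : seq (olab D Q P)) := sumn (map (w c) pi).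

Lemma hw_path c (u : otree) : exists pi, List.In pi (paths u) /\ hw c u = sumw c pi.
Proof.
elim/tree_ind': u => l ch IH.
case: ch IH => [|c0 ch] IH.
  by exists [:: l]; split; [left|].
have [x [Hx Ex]] := @maxs_attained _ (hw c) (c0 :: ch) ltac:(done).
have [pi [Hpi Epi]] := IH x Hx.
exists (l :: pi); split.
  rewrite [paths _]/=; apply: List.in_map; apply: (flatten_In (List.in_map _ _ _ Hx)) Hpi.
have -> : hw c (Node l (c0 :: ch)) = w c l + maxs (map (hw c) (c0 :: ch)) by [].
by rewrite Ex Epi.
Qed.

Lemma sumw_le c pi : sumw c pi <= size pi + c * nesting pi.
Proof.
elim: pi => [|l pi IH] //.
rewrite /sumw /nesting /= -/(sumw c pi) -/(nesting pi).
move: IH; rewrite /w; case: is_QPlab => /= IH.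
  rewrite add1n mulnS; lia.
rewrite add0n; lia.
Qed.

Lemma in_TS_TSP (t : itree) : in_TS rkS t -> in_TSP rkS t.
Proof.
elim/tree_ind': t => [[s|p] ch IH] //= /andP [-> Hall] /=.
apply: all_In => x Hx; exact: IH x Hx (In_all Hall Hx).
Qed.
End Main.

Unset Implicit Arguments.

Theorem mainTheorem10 (S D : finType) (rkS : S -> nat) (rkD : D -> nat)
  (M : mttr S D) :
  wf_mttr rkS rkD M ->
  depth_proper rkS M ->
  finite_ML_nesting rkS M ->
  LHI rkS M.
Proof.
move=> Hwf _ [b Hb].
set c := g rkS M 2.
have Hc : 0 < c by apply: leq_trans (g_ge2 rkS M 2).
have Hn : forall (s : tree (S + la M)) (q : st M), in_TSP rkS s -> height s <= 2 -> height (evalq s q) <= c.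
  by move=> s q Hs Hh; rewrite /c; exact: evalq_height Hs Hh q.
exists (c + c * b).
suff H : forall h (t : tree (S + la M)), in_TSP rkS t -> height t <= h -> height (Mhat t) <= (c + c * b) * height t.
  by move=> t Ht; apply: H (in_TS_TSP Ht) (leqnn _).
elim=> [|h IH] t Ht Hh.
  by move: Hh; case: t {Ht}.
have Hpos : 0 < height t by case: (t) => ? ?.
case: (leqP (height t) 2) => H2.
  apply: leq_trans (Hn _ _ Ht H2) _.
  apply: leq_trans (leq_addr (c * b) c) _; exact: leq_pmulr.
pose d := height t - 3.
have Hd : height t <= d.+1 + 2 by rewrite /d; lia.
have [Hp1 [Hp2 H3]] := trunc_rel Hwf Hc Hn Ht Hd (q0 M).
rewrite Hwf.1 in Hp1 Hp2 H3.
have H4 := H3 [::] [::] erefl erefl (fun j (hj : j < 0) => False_ind _ (notF hj)).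
rewrite !pr_subst0 // in H4.
set t' := trunc d.+1 t in Hp2 H4.
have [pi [Hpi Epi]] := hw_path c (evalq t' (q0 M)).
have Ht' : in_TSP rkS t' by exact: in_TSP_trunc.
have Hnest := Hb t' Ht' pi Hpi.
have Hsz := paths_size Hpi.
have Hht' : height t' <= d.+2 := height_trunc d.+1 t.
have Hdh : d.+2 <= h by rewrite /d; lia.
have IH' := IH t' Ht' (leq_trans Hht' Hdh).
rewrite /Mhat in IH' Hsz *.
apply: leq_trans H4 _; rewrite Epi.
apply: leq_trans (sumw_le c pi) _.
apply: leq_trans (leq_add (leq_trans Hsz IH') (leq_mul (leqnn c) Hnest)) _.
have Hlt : (height t').+1 <= height t by apply: leq_trans (Hht' : _ < d.+3) _; rewrite /d; lia.
apply: leq_trans _ (leq_mul (leqnn _) Hlt).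
rewrite mulnS addnC leq_add2r; exact: leq_addl.
Qed.
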